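(* Let $\ell,\ell'\ge1$ and let $A$ ($\ell\times\ell$) and $A'$ ($\ell'\times\ell'$) be symmetric matrices with zero diagonal and all off-diagonal entries in $\{\frac12,1\}$, both dense. Let $J$ be the $\ell'\times\ell$ all-ones matrix and let $$C=\begin{pmatrix}A & J^{T}\\ J & A'\end{pmatrix}.$$ Then $C$ is dense.
   Context: For a symmetric $s\times s$ matrix $M$, consider the quadratic form $\mathbf{u}M\mathbf{u}^T$ on the simplex $\{\mathbf{u}=(u_1,\dots,u_s): u_i\ge 0,\ \sum_i u_i=1\}$. $M$ is called dense if this form does not attain its maximum on the boundary of the simplex, i.e. every maximizer $\mathbf{u}$ has all coordinates $u_i>0$. *)

(* Defs.v *)
From mathcomp Require Import all_boot all_order all_algebra.
From mathcomp Require Import reals.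
Set Implicit Arguments. Unset Strict Implicit. Unset Printing Implicit Defensive.
Import Order.TTheory GRing.Theory Num.Theory.
Local Open Scope ring_scope.

Definition in_simplex (R : realType) (s : nat) (u : 'rV[R]_s) : Prop :=
  (forall i, 0 <= u 0 i) /\ \sum_(i < s) u 0 i = 1.

Definition qform (R : realType) (s : nat) (M : 'M[R]_s) (u : 'rV[R]_s) : R :=
  (u *m M *m u^T) 0 0.

Definition simplex_maximizer (R : realType) (s : nat) (M : 'M[R]_s)
    (u : 'rV[R]_s) : Prop :=
  in_simplex u /\ forall v, in_simplex v -> qform M v <= qform M u.

Definition dense (R : realType) (s : nat) (M : 'M[R]_s) : Prop :=
  forall u, simplex_maximizer M u -> forall i, 0 < u 0 i.

Definition half_one_matrix (R : realType) (s : nat) (M : 'M[R]_s) : Prop :=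
  M^T = M /\ (forall i, M i i = 0) /\
  (forall i j, i != j -> M i j = 2^-1 \/ M i j = 1).

(* Main.v *)
Require Import Defs.
From mathcomp Require Import all_boot all_order all_algebra.
From mathcomp Require Import reals.
From mathcomp Require Import ring lra.
From Stdlib Require Import Classical.
Import Order.TTheory GRing.Theory Num.Theory.
Local Open Scope ring_scope.

Section S.
Variable R : realType.

Definition rsum n (x : 'rV[R]_n) := \sum_(i < n) x 0 i.
Arguments rsum {n}.

Lemma qformE n (M : 'M[R]_n) u :
  qform M u = \sum_i \sum_j u 0 i * M i j * u 0 j.
Proof.
rewrite /qform mxE.
under eq_bigr => i _ do rewrite [u^T _ _]mxE [(u *m M) _ _]mxE mulr_suml.
by rewrite exchange_big.
Qed.

Lemma qformZ n (M : 'M[R]_n) c u : qform M (c *: u) = c ^+ 2 * qform M u.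
Proof.
rewrite !qformE mulr_sumr; apply: eq_bigr => i _; rewrite mulr_sumr.
by apply: eq_bigr => j _; rewrite !mxE; ring.
Qed.

Lemma qform0 n (M : 'M[R]_n) : qform M 0 = 0.
Proof. by rewrite /qform mul0mx mul0mx mxE. Qed.

Lemma rsumZ n c (x : 'rV[R]_n) : rsum (c *: x) = c * rsum x.
Proof. by rewrite /rsum mulr_sumr; apply: eq_bigr => i _; rewrite mxE. Qed.

Lemma rsum_row n m (x : 'rV[R]_n) (y : 'rV[R]_m) :
  rsum (row_mx x y) = rsum x + rsum y.
Proof.
by rewrite /rsum big_split_ord /=; congr (_ + _); apply: eq_bigr => i _;
  rewrite ?row_mxEl ?row_mxEr.
Qed.

Lemma constE n m (x : 'rV[R]_n) (y : 'rV[R]_m) :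
  (x *m (const_mx 1 : 'M_(n, m)) *m y^T) 0 0 = rsum x * rsum y.
Proof.
rewrite mxE /rsum mulr_sumr; apply: eq_bigr => j _.
rewrite !mxE; congr (_ * _).
by apply: eq_bigr => i _; rewrite mxE mulr1.
Qed.

Lemma addE n m (A B : 'M[R]_(n, m)) i j : (A + B) i j = A i j + B i j.
Proof. by rewrite mxE. Qed.

Lemma qform_block n m (M : 'M[R]_n) (N : 'M[R]_m) x y :
  qform (block_mx M (const_mx 1 : 'M[R]_(m, n))^T (const_mx 1 : 'M[R]_(m, n)) N)
    (row_mx x y) = qform M x + 2 * rsum x * rsum y + qform N y.
Proof.
rewrite /qform tr_row_mx mul_row_block mul_row_col !mulmxDl trmx_const.
rewrite !addE !constE.
by rewrite [rsum y * _]mulrC; ring.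
Qed.

Lemma qform_lt1 n (M : 'M[R]_n) x :
  half_one_matrix M -> in_simplex x -> qform M x < 1.
Proof.
move=> [_ [hd ho]] [hx hs].
have step i : \sum_j x 0 i * M i j * x 0 j <= x 0 i - x 0 i ^+ 2.
  rewrite (bigD1 i) //= hd mulr0 mul0r add0r.
  have -> : x 0 i - x 0 i ^+ 2 = \sum_(j | j != i) x 0 i * x 0 j.
    have : \sum_j x 0 i * x 0 j = x 0 i by rewrite -mulr_sumr hs mulr1.
    rewrite (bigD1 i) //= => h; rewrite -{1}h.
    by rewrite expr2 addrAC subrr add0r.
  apply: ler_sum => j hj.
  have hij : i != j by rewrite eq_sym.
  have := hx i; have := hx j.
  by case: (ho i j hij) => -> h1 h2; nra.
have [k /andP [_ hk]] : exists k, true && (0 < x 0 k).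
  apply: psumr_neq0P => [k _|]; first exact: hx.
  by rewrite hs; apply/eqP; rewrite oner_neq0.
rewrite qformE.
apply: (le_lt_trans (ler_sum _ (fun i _ => step i))).
rewrite sumrB hs ltrBlDr ltrDl.
rewrite (bigD1 k) //=.
apply: ltr_pwDl; first by rewrite exprn_gt0.
by apply: sumr_ge0 => i _; rewrite sqr_ge0.
Qed.

Lemma rsum0 n : rsum (0 : 'rV[R]_n) = 0.
Proof. by rewrite /rsum big1 // => i _; rewrite mxE. Qed.

Lemma rsum_delta n (j : 'I_n) : rsum (delta_mx 0 j : 'rV[R]_n) = 1.
Proof.
rewrite /rsum (bigD1 j) //= big1 ?addr0 => [|i hi]; first by rewrite mxE !eqxx.
by rewrite mxE (negbTE hi) andbF.
Qed.

Lemma sum_delta n (j : 'I_n) (G : 'I_n -> R) :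
  \sum_i (delta_mx 0 j : 'rV[R]_n) 0 i * G i = G j.
Proof.
rewrite (bigD1 j) //= big1 ?addr0 => [|i hi]; first by rewrite mxE !eqxx mul1r.
by rewrite mxE (negbTE hi) andbF mul0r.
Qed.

Lemma qform_delta n (M : 'M[R]_n) (j : 'I_n) :
  qform M (delta_mx 0 j) = M j j.
Proof.
rewrite qformE.
rewrite (eq_bigr (fun i => (delta_mx 0 j : 'rV[R]_n) 0 i *
   \sum_k (delta_mx 0 j : 'rV[R]_n) 0 k * M i k)); last first.
  move=> i _; rewrite mulr_sumr; apply: eq_bigr => k _; ring.
by rewrite sum_delta sum_delta.
Qed.

Lemma pos_part n m (M : 'M[R]_n) (N : 'M[R]_m) (f : 'rV[R]_n -> 'rV[R]_m -> R) (x : 'rV[R]_n) (y : 'rV[R]_m) :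
  (0 < n)%N -> half_one_matrix M -> half_one_matrix N -> dense M ->
  (forall x y, f x y = qform M x + 2 * rsum x * rsum y + qform N y) ->
  (forall i, 0 <= x 0 i) -> (forall i, 0 <= y 0 i) -> rsum x + rsum y = 1 ->
  (forall (x' : 'rV[R]_n) (y' : 'rV[R]_m), (forall i, 0 <= x' 0 i) -> (forall i, 0 <= y' 0 i) ->
     rsum x' + rsum y' = 1 -> f x' y' <= f x y) ->
  forall i, 0 < x 0 i.
Proof.
move=> hn hM hN dM hf hx hy hs hmax.
have ha : 0 < rsum x.
  rewrite lt_def /rsum sumr_ge0 ?andbT; last by move=> i _; exact: hx.
  apply/negP => /eqP ha0.
  have x0 : x = 0.
    apply/matrixP => i j; rewrite (ord1 i) mxE.
    exact: (psumr_eq0P (fun k _ => hx k) ha0).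
  rewrite x0 rsum0 add0r in hs hmax.
  have hys : in_simplex y by [].
  have hq := @qform_lt1 _ _ _ hN hys.
  set q := qform N y in hq.
  set t := (1 - q) / (2 - q).
  have h2q : 0 < 2 - q by lra.
  have ht : t * (2 - q) = 1 - q by rewrite /t divfK // gt_eqF.
  have ht0 : 0 < t by rewrite /t divr_gt0 //; lra.
  have ht1 : t <= 1 by nra.
  pose j0 := Ordinal hn. pose e := delta_mx 0 j0 : 'rV[R]_n.
  have := hmax (t *: e) ((1 - t) *: y).
  have hd : M j0 j0 = 0 by case: hM => _ [].
  rewrite !hf !rsumZ rsum_delta hs !qformZ qform_delta hd qform0 rsum0 -/q.
  have H : t ^+ 2 * 0 + 2 * (t * 1) * ((1 - t) * 1) + (1 - t) ^+ 2 * q <= 0 + 2 * 0 * 1 + q -> False.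
    move=> H; nra.
  move=> h; apply: H; apply: h.
  - by move=> i; rewrite !mxE; apply: mulr_ge0; [exact: ltW| case: (_ && _)].
  - by move=> i; rewrite mxE; apply: mulr_ge0; [lra| exact: hy].
  - by ring.
move=> i; rewrite ltNge; apply/negP => hxi.
set a := rsum x in ha hs hmax.
have ha0 : a != 0 by rewrite gt_eqF.
pose w := a^-1 *: x.
have xw : x = a *: w by rewrite /w scalerA divff // scale1r.
have hw : in_simplex w.
  split; first by move=> k; rewrite mxE mulr_ge0 // invr_ge0 ltW.
  by change (rsum w = 1); rewrite rsumZ mulVf.
have [v [hv hlt]] : exists v, in_simplex v /\ qform M w < qform M v.
  apply: NNPP => H.
  have : 0 < w 0 i.
    apply: dM; split => // v hv; rewrite leNgt; apply/negP => hl; apply: H; by exists v.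
  by rewrite mxE pmulr_rgt0 ?invr_gt0 // ltNge hxi.
have qx : qform M x = a ^+ 2 * qform M w by rewrite {1}xw qformZ.
have := hmax (a *: v) y.
rewrite !hf rsumZ qformZ (proj2 hv : rsum v = 1) mulr1 qx -/a.
have ha2 : 0 < a ^+ 2 by rewrite exprn_gt0.
have H : a ^+ 2 * qform M v + 2 * a * rsum y + qform N y <=
  a ^+ 2 * qform M w + 2 * a * rsum y + qform N y -> False.
  by move=> H; nra.
move=> h; apply: H; apply: h => //.
  by move=> k; rewrite mxE; apply: mulr_ge0; [exact: ltW | exact: (proj1 hv)].
Qed.

End S.
Arguments rsum {R n}.
Arguments rsum_row {R n m}.
Arguments qform_block {R n m}.

Theorem mainTheorem5 (R : realType) (l l' : nat)
  (A : 'M[R]_l) (A' : 'M[R]_l') :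
  (1 <= l)%N -> (1 <= l')%N ->
  half_one_matrix A -> half_one_matrix A' ->
  dense A -> dense A' ->
  dense (block_mx A (const_mx 1 : 'M[R]_(l', l))^T (const_mx 1 : 'M[R]_(l', l)) A').
Proof.
move=> hl hl' hA hA' dA dA' u [[hu hs] hmax] i.
set C := block_mx _ _ _ _ in hmax.
pose x := lsubmx u; pose y := rsubmx u.
have uE : u = row_mx x y by rewrite hsubmxK.
have hx : forall k, 0 <= x 0 k by move=> k; rewrite mxE.
have hy : forall k, 0 <= y 0 k by move=> k; rewrite mxE.
have hs' : rsum x + rsum y = 1 by rewrite -rsum_row -uE.
have hmax' : forall (x' : 'rV[R]_l) (y' : 'rV[R]_l'), (forall k, 0 <= x' 0 k) ->
    (forall k, 0 <= y' 0 k) -> rsum x' + rsum y' = 1 ->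
    qform C (row_mx x' y') <= qform C (row_mx x y).
  move=> x' y' h1 h2 h3; rewrite -uE; apply: hmax; split.
    by move=> k; rewrite mxE; case: split => j; [exact: h1 | exact: h2].
  by change (rsum (row_mx x' y') = 1); rewrite rsum_row.
have px := @pos_part R l l' A A' (fun x y => qform C (row_mx x y)) x y hl hA hA' dA
  (fun x y => qform_block A A' x y) hx hy hs' hmax'.
have py := @pos_part R l' l A' A (fun y x => qform C (row_mx x y)) y x hl' hA' hA dA'.
have {}py : forall k, 0 < y 0 k.
  apply: py => //.
  - by move=> y' x' /=; rewrite qform_block; ring.
  - by rewrite addrC.
  - by move=> y' x' h1 h2 h3; apply: hmax' => //; rewrite addrC.
rewrite uE mxE; case: split => j; [exact: px | exact: py].
Qed.
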